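(* Let $(\mathfrak g,\Delta)$ be a quasitriangular Hom-Lie bialgebra, where $(\mathfrak{g},[\cdot,\cdot]_{\mathfrak{g}},\phi_{\mathfrak{g}})$ is finite-dimensional and $\Delta(x)=(\mathrm{ad}_x\otimes\phi_{\mathfrak g}+\phi_{\mathfrak g}\otimes\mathrm{ad}_x)r$ for a solution $r$ of the classical Hom-Yang-Baxter equation with $(\phi_{\mathfrak g}\otimes\mathrm{Id})r=(\mathrm{Id}\otimes\phi_{\mathfrak g})r$. Then $r^\sharp\phi_{\mathfrak g}^*:\mathfrak g^*\to\mathfrak g$ is a homomorphism of Hom-Lie algebras from $(\mathfrak g^*,[\cdot,\cdot]_{\mathfrak g^*},\phi_{\mathfrak g}^* )$ to $(\mathfrak{g},[\cdot,\cdot]_{\mathfrak{g}},\phi_{\mathfrak{g}})$, where $\langle[a,b]_{\mathfrak g^*},x\rangle=\langle\Delta(x),a\otimes b\rangle$.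
   Context: A Hom-Lie algebra $(\mathfrak{h},[\cdot,\cdot]_{\mathfrak{h}},\phi_{\mathfrak{h}})$: skew-symmetric bilinear bracket and linear map with $\phi_{\mathfrak h}[x,y]=[\phi_{\mathfrak h}x,\phi_{\mathfrak h}y]$ and $[\phi_{\mathfrak h}(x),[y,z]]+[\phi_{\mathfrak h}(y),[z,x]]+[\phi_{\mathfrak h}(z),[x,y]]=0$; weakly involutive if $[\phi_{\mathfrak h}^2(x),y]=[x,y]$. A homomorphism $f:\mathfrak h\to\mathfrak k$ of Hom-Lie algebras satisfies $f[x,y]=[f(x),f(y)]$ and $f\phi_{\mathfrak h}=\phi_{\mathfrak k}f$. $\mathrm{ad}_xy=[x,y]$; for $t\in\mathfrak g\otimes\mathfrak g$, $\mathrm{ad}_zt=(\mathrm{ad}_z\otimes\phi_{\mathfrak g}+\phi_{\mathfrak g}\otimes\mathrm{ad}_z)t$. $r^\sharp:\mathfrak g^*\to\mathfrak g$, $\langle r^\sharp(a),b\rangle=\langle r,a\otimes b\rangle$. For $r=\sum_ix_i\otimes y_i$, $[r,r]_{\mathfrak g}=\sum_{i,j}([x_i,x_j]\otimes\phi_{\mathfrak g}(y_i)\otimes\phi_{\mathfrak g}(y_j)+\phi_{\mathfrak g}(x_i)\otimes[y_i,x_j]\otimes\phi_{\mathfrak g}(y_j)+\phi_{\mathfrak g}(x_i)\otimes\phi_{\mathfrak g}(x_j)\otimes[y_i,y_j])$; the classical Hom-Yang-Baxter equation is $[r,r]_{\mathfrak g}=0$. A Hom-Lie bialgebra $(\mathfrak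 g,\Delta)$: weakly involutive $\mathfrak g$ and $\Delta:\mathfrak g\to\mathfrak g\otimes\mathfrak g$ such that $(\mathfrak g^*,[\cdot,\cdot]_{\mathfrak g^*},\phi_{\mathfrak g}^* )$ with $\langle[a,b]_{\mathfrak g^*},x\rangle=\langle\Delta(x),a\otimes b\rangle$ is a weakly involutive Hom-Lie algebra and $\Delta[x,y]=\mathrm{ad}_{\phi_{\mathfrak g}(x)}\Delta(y)-\mathrm{ad}_{\phi_{\mathfrak g}(y)}\Delta(x)$. It is coboundary if $\Delta(x)=\mathrm{ad}_xr$ with $(\phi_{\mathfrak g}\otimes\mathrm{Id})r=(\mathrm{Id}\otimes\phi_{\mathfrak g})r$, and quasitriangular if moreover $r$ solves the classical Hom-Yang-Baxter equation. *)

(* Defs.v *)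
From HB Require Import structures.
From mathcomp Require Import all_boot all_order all_algebra.
Set Implicit Arguments. Unset Strict Implicit. Unset Printing Implicit Defensive.
Import GRing.Theory.
Local Open Scope ring_scope.

Section HomLie.
Variables (K : fieldType) (V : lmodType K).

Definition is_HomLie (br : V -> V -> V) (phi : V -> V) : Prop :=
  [/\ (forall (a : K) x y z, br (a *: x + y) z = a *: br x z + br y z),
      (forall (a : K) x y z, br z (a *: x + y) = a *: br z x + br z y),
      (forall (a : K) x y, phi (a *: x + y) = a *: phi x + phi y),
      (forall x y, br x y = - br y x) &
      (forall x y, phi (br x y) = br (phi x) (phi y)) /\
      (forall x y z, br (phi x) (br y z) + br (phi y) (br z x)
                     + br (phi z) (br x y) = 0)].


Definition weakly_involutive (br : V -> V -> V) (phi : V -> V) : Prop :=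
  forall x y, br (phi (phi x)) y = br x y.

Definition HomLie_hom (W : lmodType K) (brV : V -> V -> V) (phiV : V -> V)
    (brW : W -> W -> W) (phiW : W -> W) (f : V -> W) : Prop :=
  (forall x y, f (brV x y) = brW (f x) (f y)) /\
  (forall x, f (phiV x) = phiW (f x)).
End HomLie.

(* g is identified with 'cV[K]_n via a basis e_i := E i.
   g^* is identified with 'cV[K]_n via the dual basis; the pairing is
   <a, x> = \sum_i a_i x_i.
   g (x) g is identified with 'M[K]_n via x (x) y |-> x *m y^T,
   so that <t, a (x) b> = a^T t b and (A (x) B) t = A t B^T.
   phi_g is given by a matrix P : phi_g x = P *m x; then phi_g^* a = P^T *m a. *)
Section FinDim.
Variables (K : fieldType) (n : nat).
Notation V := 'cV[K]_n.

Definition E (i : 'I_n) : V := delta_mx i 0.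

Definition pair (a x : V) : K := (a^T *m x) 0 0.

Definition pair2 (t : 'M[K]_n) (a b : V) : K := (a^T *m t *m b) 0 0.

Definition phimap (P : 'M[K]_n) : V -> V := fun x => P *m x.

Definition dualmap (P : 'M[K]_n) : V -> V := fun a => P^T *m a.

Definition admx (br : V -> V -> V) (z : V) : 'M[K]_n :=
  \matrix_(i, j) (br z (E j)) i 0.

(* ad_z t = (ad_z (x) phi + phi (x) ad_z) t *)
Definition adT (br : V -> V -> V) (P : 'M[K]_n) (z : V) (t : 'M[K]_n)
  : 'M[K]_n :=
  admx br z *m t *m P^T + P *m t *m (admx br z)^T.

Definition dual_br (Delta : V -> 'M[K]_n) (a b : V) : V :=
  \col_i pair2 (Delta (E i)) a b.

Definition rsharp (r : 'M[K]_n) (a : V) : V :=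
  \col_j pair2 r a (E j).

(* [r,r]_g = 0, written in coordinates: r = \sum_{i,k} r_{ik} e_i (x) e_k,
   and [r,r] has (p,q,s)-coordinate given below. *)
Definition CHYBE (br : V -> V -> V) (P : 'M[K]_n) (r : 'M[K]_n) : Prop :=
  forall p q s : 'I_n,
    \sum_(i < n) \sum_(j < n) \sum_(k < n) \sum_(l < n)
      r i k * r j l *
      ( (br (E i) (E j)) p 0 * (P *m E k) q 0 * (P *m E l) s 0
      + (P *m E i) p 0 * (br (E k) (E j)) q 0 * (P *m E l) s 0
      + (P *m E i) p 0 * (P *m E j) q 0 * (br (E k) (E l)) s 0 ) = 0.

Definition HomLie_bialgebra (br : V -> V -> V) (P : 'M[K]_n)
    (Delta : V -> 'M[K]_n) : Prop :=
  [/\ is_HomLie br (phimap P), weakly_involutive br (phimap P),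
      is_HomLie (dual_br Delta) (dualmap P),
      weakly_involutive (dual_br Delta) (dualmap P) &
      forall x y, Delta (br x y)
                  = adT br P (P *m x) (Delta y) - adT br P (P *m y) (Delta x)].

Definition quasitriangular (br : V -> V -> V) (P : 'M[K]_n) (r : 'M[K]_n)
    : Prop :=
  [/\ HomLie_bialgebra br P (fun x => adT br P x r),
      P *m r = r *m P^T & CHYBE br P r].
End FinDim.

(* Main.v *)
Require Import Defs.
From mathcomp Require Import all_boot all_order all_algebra.
From mathcomp Require Import ring.
Set Implicit Arguments. Unset Strict Implicit. Unset Printing Implicit Defensive.
Import GRing.Theory.
Local Open Scope ring_scope.

Section Aux.
Variables (K : fieldType) (n : nat).
Notation V := 'cV[K]_n.
Local Notation E := (@E K n).

Lemma mulE (M : 'M[K]_n) k i : (M *m E k) i 0 = M i k.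
Proof. by rewrite /E -colE mxE. Qed.

Lemma expandV (x : V) : x = \sum_i x i 0 *: E i.
Proof.
rewrite {1}(matrix_sum_delta x); apply: eq_bigr => i _.
by rewrite big_ord1.
Qed.

Lemma mul_expand (M : 'M[K]_n) (x : V) : M *m x = \sum_i x i 0 *: (M *m E i).
Proof.
rewrite {1}(expandV x) mulmx_sumr; apply: eq_bigr => i _; by rewrite scalemxAr.
Qed.

Lemma pairE (a x : V) : pair a x = \sum_i a i 0 * x i 0.
Proof. rewrite /pair mxE; apply: eq_bigr => i _; by rewrite mxE. Qed.

Lemma pairC (a x : V) : pair a x = pair x a.
Proof. rewrite !pairE; apply: eq_bigr => i _; by rewrite mulrC. Qed.

Lemma pair_Er p (x : V) : pair (E p) x = x p 0.
Proof.
rewrite pairE (bigD1 p) //= big1 ?addr0.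
  by rewrite /E mxE !eqxx mul1r.
by move=> i /negPf Hi; rewrite /E mxE Hi mul0r.
Qed.

Lemma pair_sumr (a : V) (c : 'I_n -> K) (v : 'I_n -> V) :
  pair a (\sum_i c i *: v i) = \sum_i c i * pair a (v i).
Proof.
rewrite pairE; under eq_bigr do rewrite summxE big_distrr /=.
rewrite exchange_big; apply: eq_bigr => i _; rewrite pairE big_distrr.
by apply: eq_bigr => j _; rewrite mxE mulrCA.
Qed.

Lemma pair_suml (a : V) (c : 'I_n -> K) (v : 'I_n -> V) :
  pair (\sum_i c i *: v i) a = \sum_i c i * pair (v i) a.
Proof.
rewrite pairC pair_sumr; apply: eq_bigr => i _; by rewrite pairC.
Qed.

Lemma pair_N (a x : V) : pair a (- x) = - pair a x.
Proof. rewrite !pairE -sumrN; apply: eq_bigr => i _; by rewrite mxE mulrN. Qed.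

Variable br : V -> V -> V.
Hypothesis Hl : forall (a : K) x y z, br (a *: x + y) z = a *: br x z + br y z.
Hypothesis Hr : forall (a : K) x y z, br z (a *: x + y) = a *: br z x + br z y.

Lemma br0l z : br 0 z = 0.
Proof.
have := Hl 1 0 0 z; rewrite scale1r addr0 scale1r => H.
apply: (@addrI _ (br 0 z)); rewrite addr0; by rewrite -H.
Qed.
Lemma br0r z : br z 0 = 0.
Proof.
have := Hr 1 0 0 z; rewrite scale1r addr0 scale1r => H.
apply: (@addrI _ (br z 0)); rewrite addr0; by rewrite -H.
Qed.

Lemma br_suml (c : 'I_n -> K) (u : 'I_n -> V) z :
  br (\sum_i c i *: u i) z = \sum_i c i *: br (u i) z.
Proof.
apply: (big_rec2 (fun A B => br B z = A)); first exact: br0l.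
by move=> i y1 y2 _ <-; rewrite Hl.
Qed.
Lemma br_sumr (c : 'I_n -> K) (u : 'I_n -> V) z :
  br z (\sum_i c i *: u i) = \sum_i c i *: br z (u i).
Proof.
apply: (big_rec2 (fun A B => br z B = A)); first exact: br0r.
by move=> i y1 y2 _ <-; rewrite Hr.
Qed.

Lemma admxE z (v : V) : admx br z *m v = br z v.
Proof.
rewrite [in RHS](expandV v) br_sumr; apply/matrixP => i j.
rewrite (ord1 j) !mxE summxE; apply: eq_bigr => k _.
by rewrite !mxE mulrC.
Qed.


Lemma br_entry (u v : V) p :
  (br u v) p 0 = \sum_i \sum_j u i 0 * v j 0 * (br (E i) (E j)) p 0.
Proof.
rewrite [in LHS](expandV u) br_suml summxE; apply: eq_bigr => i _.
rewrite [in LHS](expandV v) br_sumr mxE summxE big_distrr /=.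
by apply: eq_bigr => j _; rewrite mxE mulrA.
Qed.

Variables (P r : 'M[K]_n).
Local Notation Gm := (r *m P^T).
Local Notation Fm := ((P *m r)^T).

Lemma GmE i q : (Gm *m E q) i 0 = \sum_k r i k * P q k.
Proof. rewrite mulE mxE; apply: eq_bigr => k _; by rewrite mxE. Qed.
Lemma FmE k p : (Fm *m E p) k 0 = \sum_i P p i * r i k.
Proof. rewrite mulE !mxE; apply: eq_bigr => i _; by []. Qed.

Lemma chybe_basis (CH : CHYBE br P r) p q s :
  pair (E p) (br (Gm *m E q) (Gm *m E s))
  + pair (E q) (br (Fm *m E p) (Gm *m E s))
  + pair (E s) (br (Fm *m E p) (Fm *m E q)) = 0.
Proof.
rewrite -(CH p q s) !pair_Er !br_entry.
have T1 : \sum_i \sum_j (Gm *m E q) i 0 * (Gm *m E s) j 0 * br (E i) (E j) p 0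
  = \sum_i \sum_j \sum_k \sum_l r i k * r j l * (br (E i) (E j) p 0 * (P *m E k) q 0 * (P *m E l) s 0).
  apply: eq_bigr => i _; apply: eq_bigr => j _.
  rewrite !GmE -mulrA big_distrl /=; apply: eq_bigr => k _.
  rewrite big_distrl big_distrr /=; apply: eq_bigr => l _.
  rewrite !mulE; ring.
have T2 : \sum_k \sum_j (Fm *m E p) k 0 * (Gm *m E s) j 0 * br (E k) (E j) q 0
  = \sum_i \sum_j \sum_k \sum_l r i k * r j l * ((P *m E i) p 0 * br (E k) (E j) q 0 * (P *m E l) s 0).
  transitivity (\sum_k \sum_j \sum_i \sum_l r i k * r j l * ((P *m E i) p 0 * br (E k) (E j) q 0 * (P *m E l) s 0)).
    apply: eq_bigr => k _; apply: eq_bigr => j _.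
    rewrite FmE GmE -mulrA big_distrl /=; apply: eq_bigr => i _.
    rewrite big_distrl big_distrr /=; apply: eq_bigr => l _.
    rewrite !mulE; ring.
  under eq_bigr do rewrite exchange_big /=.
  rewrite exchange_big /=; apply: eq_bigr => i _; by rewrite exchange_big.
have T3 : \sum_k \sum_l (Fm *m E p) k 0 * (Fm *m E q) l 0 * br (E k) (E l) s 0
  = \sum_i \sum_j \sum_k \sum_l r i k * r j l * ((P *m E i) p 0 * (P *m E j) q 0 * br (E k) (E l) s 0).
  transitivity (\sum_k \sum_l \sum_i \sum_j r i k * r j l * ((P *m E i) p 0 * (P *m E j) q 0 * br (E k) (E l) s 0)).
    apply: eq_bigr => k _; apply: eq_bigr => l _.
    rewrite !FmE -mulrA big_distrl /=; apply: eq_bigr => i _.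
    rewrite big_distrl big_distrr /=; apply: eq_bigr => j _.
    rewrite !mulE; ring.
  under eq_bigr do rewrite exchange_big /=.
  rewrite exchange_big /=; apply: eq_bigr => i _.
  under eq_bigr do rewrite exchange_big /=.
  by rewrite exchange_big.
rewrite T1 T2 T3 -!big_split /=; apply: eq_bigr => i _.
rewrite -!big_split /=; apply: eq_bigr => j _.
rewrite -!big_split /=; apply: eq_bigr => k _.
rewrite -!big_split /=; apply: eq_bigr => l _.
ring.
Qed.

Lemma chybe_gen (CH : CHYBE br P r) (a b : V) s :
  pair a (br (Gm *m b) (Gm *m E s))
  + pair b (br (Fm *m a) (Gm *m E s))
  + pair (E s) (br (Fm *m a) (Fm *m b)) = 0.
Proof.
set w := Gm *m E s.
have E1 : pair a (br (Gm *m b) w)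
   = \sum_p \sum_q a p 0 * b q 0 * pair (E p) (br (Gm *m E q) w).
  rewrite {1}(expandV a) pair_suml (mul_expand _ b) br_suml.
  apply: eq_bigr => p _; rewrite pair_sumr big_distrr /=.
  by apply: eq_bigr => q _; rewrite mulrA.
have E2 : pair b (br (Fm *m a) w)
   = \sum_p \sum_q a p 0 * b q 0 * pair (E q) (br (Fm *m E p) w).
  rewrite {1}(expandV b) pair_suml (mul_expand _ a) br_suml.
  under eq_bigr do rewrite pair_sumr big_distrr /=.
  rewrite exchange_big /=; apply: eq_bigr => p _.
  by apply: eq_bigr => q _; rewrite mulrCA mulrA.
have E3 : pair (E s) (br (Fm *m a) (Fm *m b))
   = \sum_p \sum_q a p 0 * b q 0 * pair (E s) (br (Fm *m E p) (Fm *m E q)).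
  rewrite (mul_expand _ a) br_suml pair_sumr.
  apply: eq_bigr => p _; rewrite (mul_expand _ b) br_sumr pair_sumr big_distrr /=.
  by apply: eq_bigr => q _; rewrite mulrA.
rewrite E1 E2 E3 -!big_split /= big1 // => p _.
rewrite -!big_split /= big1 // => q _.
by rewrite -!mulrDr chybe_basis // mulr0.
Qed.

Lemma tr00 (M : 'M[K]_1) : M 0 0 = M^T 0 0.
Proof. by rewrite mxE. Qed.

Lemma dual_pair (a b x : V) :
  pair (dual_br (fun z => adT br P z r) a b) x
  = pair a (br x (Gm *m b)) + pair b (br x (Fm *m a)).
Proof.
rewrite pairE [in RHS](expandV x) !br_suml !pair_sumr -big_split /=.
apply: eq_bigr => i _; rewrite mxE -mulrDr mulrC; congr (_ * _).
rewrite /pair2 /adT mulmxDr mulmxDl mxE; congr (_ + _).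
  by rewrite /pair -admxE !mulmxA.
rewrite /pair -admxE [RHS]tr00 !trmx_mul !trmxK !mulmxA.
by [].
Qed.

Lemma rsharpE (v : V) : rsharp r v = r^T *m v.
Proof.
apply/matrixP => j k; rewrite (ord1 k) !mxE /pair2 /E -colE !mxE.
apply: eq_bigr => i _; by rewrite !mxE mulrC.
Qed.

Lemma entry_pair (M : 'M[K]_n) (v : V) t : (M *m v) t 0 = pair v (M^T *m E t).
Proof.
rewrite pairE mxE; apply: eq_bigr => i _; by rewrite mulE mxE mulrC.
Qed.

End Aux.

Theorem corollary4p10 (K : fieldType) (n : nat)
    (br : 'cV[K]_n -> 'cV[K]_n -> 'cV[K]_n) (P r : 'M[K]_n) :
  quasitriangular br P r ->
  HomLie_hom (dual_br (fun x => adT br P x r)) (dualmap P)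
             br (phimap P)
             (fun a => rsharp r (dualmap P a)).
Proof.
move=> [[[Hl Hr _ Hsk _] _ _ _ _] HP CH].
have fE : forall v, rsharp r (dualmap P v) = (P *m r)^T *m v.
  by move=> v; rewrite rsharpE /dualmap mulmxA trmx_mul.
split.
- move=> a b; rewrite !fE; apply/matrixP => t j; rewrite (ord1 j).
  rewrite entry_pair trmxK HP dual_pair // -pair_Er.
  rewrite (Hsk (r *m P^T *m E K t) (r *m P^T *m b)).
  rewrite (Hsk (r *m P^T *m E K t) ((P *m r)^T *m a)) !pair_N.
  have H := @chybe_gen K n br Hl Hr P r CH a b t.
  by rewrite -[RHS]subr0 -H -HP; ring.
- move=> x; rewrite !fE /phimap /dualmap.
  have HF : (P *m r)^T = P *m r^T by rewrite HP trmx_mul trmxK.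
  by rewrite mulmxA [in LHS]HF trmx_mul !mulmxA.
Qed.
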